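(* Let $R$ be an invariant Bezout domain which is a ring of simple range 2. Then $R$ is a D-K elementary divisor ring.
   Context: All rings are associative with nonzero identity. A Bezout domain is a domain in which every finitely generated right ideal and every finitely generated left ideal is principal. A nonzero element $a$ is invariant if $aR=Ra$; a domain is invariant if every nonzero element is invariant. For $x\in R$, $RxR$ denotes the two-sided ideal generated by $x$. A ring $R$ is called a ring of simple range 2 if for all $a,b,c\in R$ with $c\neq 0$ and $RaR+RbR+RcR=R$ there exist $p,q\in R$ such that $R(pa+qb)R+RpcR=R$. Two matrices $A,B$ over $R$ are equivalent if $B=PAQ$ for invertible $P,Q$. $R$ is a D-K elementary divisor ring if every (rectangular) matrix over $R$ is equivalent to a matrix $\mathrm{diag}(\varepsilon_1,\dots,\varepsilon_r,0,\dots,0)$ such that $R\varepsilon_{i+1}R\subseteq \varepsilon_iR\cap R\varepsilon_i$ for $i=1,\dots,r-1$ and $\varepsilon_1,\dots,\varepsilon_{r-1}$ are invariant elements. *)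

(* Defs.v *)
From HB Require Import structures.
From mathcomp Require Import all_boot all_order all_algebra.
Set Implicit Arguments. Unset Strict Implicit. Unset Printing Implicit Defensive.
Import GRing.Theory.
Local Open Scope ring_scope.

Section Defs.
Variable R : nzRingType.

(* R has no zero divisors (R is nontrivial by nzRingType) *)
Definition is_domain : Prop := forall a b : R, a * b = 0 -> a = 0 \/ b = 0.

Definition in_rideal (s : seq R) (x : R) : Prop :=
  exists f : 'I_(size s) -> R, x = \sum_(i < size s) s`_i * f i.
Definition in_lideal (s : seq R) (x : R) : Prop :=
  exists f : 'I_(size s) -> R, x = \sum_(i < size s) f i * s`_i.
Definition in_ideal2 (s : seq R) (x : R) : Prop :=
  exists (n : nat) (u v : 'I_n -> R) (k : 'I_n -> 'I_(size s)),
    x = \sum_(i < n) u i * s`_(k i) * v i.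

Definition bezout : Prop :=
  (forall s : seq R, exists d : R, forall x, in_rideal s x <-> exists r, x = d * r) /\
  (forall s : seq R, exists d : R, forall x, in_lideal s x <-> exists r, x = r * d).

Definition invariant_elt (a : R) : Prop :=
  a != 0 /\ (forall r, exists r', a * r = r' * a) /\ (forall r, exists r', r * a = a * r').

Definition invariant_ring : Prop := forall a : R, a != 0 -> invariant_elt a.

Definition simple_range2 : Prop :=
  forall a b c : R, c != 0 -> (forall x, in_ideal2 [:: a; b; c] x) ->
    exists p q : R, forall x, in_ideal2 [:: p * a + q * b; p * c] x.

Definition invertible_mx (n : nat) (P : 'M[R]_n) : Prop :=
  exists P' : 'M[R]_n, P *m P' = 1%:M /\ P' *m P = 1%:M.

(* D-K elementary divisor ring; eps is 0-indexed: eps 0, ..., eps (r-1) *)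
Definition DK_elementary_divisor_ring : Prop :=
  forall (m n : nat) (A : 'M[R]_(m, n)),
    exists (P : 'M[R]_m) (Q : 'M[R]_n) (r : nat) (eps : nat -> R),
      [/\ invertible_mx P, invertible_mx Q, (r <= minn m n)%N &
      [/\
        (forall (i : 'I_m) (j : 'I_n),
            (P *m A *m Q) i j = if ((i : nat) == j) && (i < r)%N then eps i else 0),
        (forall i, (i < r)%N -> eps i != 0),
        (forall i, (i.+1 < r)%N -> forall x, in_ideal2 [:: eps i.+1] x ->
             (exists y, x = eps i * y) /\ (exists y, x = y * eps i)) &
        (forall i, (i.+1 < r)%N -> invariant_elt (eps i))]].
End Defs.

(* Main.v *)
From HB Require Import structures.
From mathcomp Require Import all_boot all_order all_algebra.
From Stdlib Require Ncring Ncring_tac.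
Require Import Defs.
Set Implicit Arguments. Unset Strict Implicit. Unset Printing Implicit Defensive.
Import GRing.Theory.
Local Open Scope ring_scope.

Section NC.
Variable R : nzRingType.
#[global] Instance mcops : @Ncring.Ring_ops R 0 1 (@GRing.add R) (@GRing.mul R) (fun x y => x - y) (@GRing.opp R) (@eq R) := {}.
#[global] Instance mcring : @Ncring.Ring R 0 1 (@GRing.add R) (@GRing.mul R) (fun x y => x - y) (@GRing.opp R) (@eq R) mcops.
Proof.
constructor.
all: unfold Algebra_syntax.equality, Algebra_syntax.addition, Algebra_syntax.multiplication, Algebra_syntax.subtraction, Algebra_syntax.opposite, Algebra_syntax.zero, Algebra_syntax.one, Ncring.eq_notation, Ncring.add_notation, Ncring.mul_notation, Ncring.sub_notation, Ncring.opp_notation, Ncring.zero_notation, Ncring.one_notation.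
all: try first [exact: RelationClasses.eq_equivalence | move=> *; exact: mulrDr | by move=> ??-> ??-> | by move=> ??-> |
  exact: add0r | exact: addrC| exact: addrA| exact: mul1r| exact: mulr1| exact: mulrA| exact: mulrDl| exact: mulrDr| by [] | exact: subrr].
Qed.
End NC.

Ltac ncr := Ncring_tac.non_commutative_ring.

Definition rbez2 (R : nzRingType) := forall a b : R, exists g x y a' b',
  [/\ g = a * x + b * y, a = g * a' & b = g * b'].

Definition inv2 (R : nzRingType) (a b c d a' b' c' d' : R) :=
  [/\ a*a' + b*c' = 1, a*b' + b*d' = 0, c*a' + d*c' = 0 & c*b' + d*d' = 1] /\
  [/\ a'*a + b'*c = 1, a'*b + b'*d = 0, c'*a + d'*c = 0 & c'*b + d'*d = 1].

Section Gen.
Variable R : nzRingType.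
Hypothesis dom : is_domain R.
Hypothesis rb : rbez2 R.

Lemma canl (a x y : R) : a != 0 -> a * x = a * y -> x = y.
Proof.
move=> a0 e; have: a * (x - y) = 0 by rewrite mulrBr e subrr.
by case/dom => [/eqP|/eqP]; rewrite ?(negPf a0) ?subr_eq0 => // /eqP.
Qed.

Lemma canr (a x y : R) : a != 0 -> x * a = y * a -> x = y.
Proof.
move=> a0 e; have: (x - y) * a = 0 by rewrite mulrBl e subrr.
by case/dom => [/eqP|/eqP]; rewrite ?(negPf a0) ?subr_eq0 => // /eqP.
Qed.

Lemma unit_r (a b : R) : a * b = 1 -> b * a = 1.
Proof.
move=> e; have a0 : a != 0 by apply/eqP => a0; move: e; rewrite a0 mul0r => /eqP; rewrite eq_sym oner_eq0.
apply: (canl a0); rewrite mulrA e mul1r mulr1 //.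
Qed.

Lemma RL (p q X Y : R) : p * X + q * Y = 1 ->
  exists a b c d a' b' c' d', inv2 a b c d a' b' c' d' /\
    p * a + q * c = 1 /\ p * b + q * d = 0.
Proof.
move=> H1.
have [p0|pn0] := eqVneq p 0.
  have qY : q * Y = 1 by rewrite -H1 p0 mul0r add0r.
  have Yq := unit_r qY.
  exists 0, 1, Y, 0, 0, q, 1, 0; split; last by rewrite p0 !mul0r !mulr0 !add0r.
  by split; split; rewrite ?mul0r ?mulr0 ?add0r ?addr0 ?mul1r ?mulr1.
have [g [al [be [r' [s' [Hg Hr Hs]]]]]] := rb (Y * p) (1 - Y * q).
have gn0 : g != 0.
  apply/eqP => g0; move: Hr Hs; rewrite g0 !mul0r => Yp /eqP; rewrite subr_eq0 eq_sym => /eqP Yq.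
  case: (dom Yp) => [Y0|]; last by move/eqP; rewrite (negPf pn0).
  by move: Yq; rewrite Y0 mul0r => /eqP; rewrite eq_sym oner_eq0.
set u0 := - al + X * p * al - X * q * be.
have E2 : p * u0 + q * g = 0.
  have -> : p * u0 + q * g = (p * X + q * Y - 1) * (p * al - q * be) + (q * g - q * (Y * p * al + (1 - Y * q) * be)) by rewrite /u0; ncr.
  by rewrite H1 subrr mul0r add0r Hg subrr.
have E3 : - r' * X + s' * Y = 0.
  apply: (canl gn0); rewrite mulr0.
  have -> : g * (- r' * X + s' * Y) = - ((g * r') * X) + (g * s') * Y by ncr.
  rewrite -Hr -Hs.
  have -> : - (Y * p * X) + (1 - Y * q) * Y = Y - Y * (p * X + q * Y) by ncr.
  by rewrite H1 mulr1 subrr.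
have E4 : - r' * u0 + s' * g = 1.
  apply: (canl gn0); rewrite mulr1.
  have -> : g * (- r' * u0 + s' * g) = - ((g * r') * u0) + (g * s') * g by ncr.
  rewrite -Hr -Hs.
  have -> : - (Y * p * u0) + (1 - Y * q) * g = g - Y * (p * u0 + q * g) by ncr.
  by rewrite E2 mulr0 subr0.
have E5 : Y * p + g * - r' = 0 by rewrite mulrN -Hr subrr.
have E6 : Y * q + g * s' = 1 by rewrite -Hs addrC subrK.
set m1 := X * p + u0 * - r' - 1.
set m2 := X * q + u0 * s'.
have A1 : m1 * X + m2 * Y = 0.
  have -> : m1 * X + m2 * Y = X * (p * X + q * Y) - X + u0 * (- r' * X + s' * Y) by rewrite /m1 /m2; ncr.
  by rewrite H1 E3 mulr1 subrr mulr0 addr0.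
have B1 : m1 * u0 + m2 * g = 0.
  have -> : m1 * u0 + m2 * g = X * (p * u0 + q * g) + u0 * (- r' * u0 + s' * g) - u0 by rewrite /m1 /m2; ncr.
  by rewrite E2 E4 mulr0 mulr1 add0r subrr.
have C1 : m1 * (m1 + 1) = 0.
  have -> : m1 * (m1 + 1) = (m1 * X + m2 * Y) * p + (m1 * u0 + m2 * g) * - r' - m2 * (Y * p + g * - r') by rewrite /m1 /m2; ncr.
  by rewrite A1 B1 E5 !mul0r mulr0 addr0 subrr.
have C2 : (m1 + 1) * m2 = 0.
  have -> : (m1 + 1) * m2 = (m1 * X + m2 * Y) * q + (m1 * u0 + m2 * g) * s' - m2 * (Y * q + g * s' - 1) by rewrite /m1 /m2; ncr.
  by rewrite A1 B1 E6 subrr !mul0r mulr0 addr0 subrr.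
have [m10 m20] : m1 = 0 /\ m2 = 0.
  case: (dom C1) => [m10|m11]; first by split=> //; move: C2; rewrite m10 add0r mul1r.
  exfalso.
  have m1e : m1 = -1 by rewrite -[m1](addrK 1) m11 sub0r.
  have Xe : X = m2 * Y by rewrite -[X]add0r -A1 m1e; ncr.
  have ue : u0 = m2 * g by rewrite -[u0]add0r -B1 m1e; ncr.
  have Z : (p * m2 + q) * g = 0 by rewrite -E2 ue mulrDl mulrA.
  case: (dom Z) => [Z0|]; last by move/eqP; rewrite (negPf gn0).
  move: H1; rewrite Xe mulrA -mulrDl Z0 mul0r => /eqP; rewrite eq_sym oner_eq0 //.
exists X, u0, Y, g, p, q, (- r'), s'; split; last by split.
split; split=> //.
by apply/eqP; rewrite -subr_eq0; apply/eqP.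
Qed.

Lemma F1 (a b : R) : exists g a0 b0 c0 d0 a' b' c' d',
  inv2 a0 b0 c0 d0 a' b' c' d' /\ a * a0 + b * c0 = g /\ a * b0 + b * d0 = 0.
Proof.
have [g [x [y [a1 [b1 [Hg Ha Hb]]]]]] := rb a b.
have [g0|gn0] := eqVneq g 0.
  exists 0, 1, 0, 0, 1, 1, 0, 0, 1.
  split; first by split; split; rewrite ?mul0r ?mulr0 ?add0r ?addr0 ?mul1r ?mulr1.
  by rewrite Ha Hb g0 !mul0r !add0r.
have H1 : a1 * x + b1 * y = 1.
  apply: (canl gn0); rewrite mulr1 {2}Hg Ha Hb; ncr.
have [q1 [q2 [q3 [q4 [w1 [w2 [w3 [w4 [I1 [I2 I3]]]]]]]]]] := RL H1.
exists g, q1, q2, q3, q4, w1, w2, w3, w4; split => //; split.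
  by rewrite Ha Hb -!mulrA -mulrDr I2 mulr1.
by rewrite Ha Hb -!mulrA -mulrDr I3 mulr0.
Qed.
End Gen.

Definition dom_ (R : nzRingType) := is_domain R.

Lemma F2 (R : nzRingType) : is_domain R ->
  (forall a b : R, exists g x y a' b', [/\ g = x * a + y * b, a = a' * g & b = b' * g]) ->
  forall a b : R, exists g a0 b0 c0 d0 a' b' c' d',
  inv2 a0 b0 c0 d0 a' b' c' d' /\ a0 * a + b0 * b = g /\ c0 * a + d0 * b = 0.
Proof.
move=> dom lb a b.
have domc : is_domain (R^c) by move=> x y /dom [] ->; [right|left].
have rbc : rbez2 (R^c) by move=> x y; exact: lb.
have [g [q1 [q2 [q3 [q4 [w1 [w2 [w3 [w4 [[[J1 J2 J3 J4] [J5 J6 J7 J8]] [K1 K2]]]]]]]]]]] := F1 domc rbc a b.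
exists g, q1, q3, q2, q4, w1, w3, w2, w4; split; last by split.
by split; split.
Qed.
Section Main.
Variable R : nzRingType.
Hypothesis dom : is_domain R.
Hypothesis bz : bezout R.
Hypothesis ivr : invariant_ring R.
Hypothesis sr : simple_range2 R.

Lemma invL (a r : R) : exists r', a * r = r' * a.
Proof.
have [->|an0] := eqVneq a 0; first by exists 0; rewrite ?mul0r ?mulr0.
by have [_ [H _]] := ivr an0; apply: H.
Qed.

Lemma invR (a r : R) : exists r', r * a = a * r'.
Proof.
have [->|an0] := eqVneq a 0; first by exists 0; rewrite ?mul0r ?mulr0.
by have [_ [_ H]] := ivr an0; apply: H.
Qed.

Lemma sum2 (F : 'I_2 -> R) : \sum_(i < 2) F i = F ord0 + F (lift ord0 ord0).
Proof. by rewrite !big_ord_recl big_ord0 addr0. Qed.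

Lemma rb : rbez2 R.
Proof.
move=> a b; have [d Hd] := bz.1 [:: a; b].
have [f Hf] : in_rideal [:: a; b] d by apply/Hd; exists 1; rewrite mulr1.
have [a' Ha] : exists r, a = d * r.
  apply/Hd; exists (fun i : 'I_2 => if i == ord0 then 1 else 0).
  by rewrite sum2 /= mulr1 mulr0 addr0.
have [b' Hb] : exists r, b = d * r.
  apply/Hd; exists (fun i : 'I_2 => if i == ord0 then 0 else 1).
  by rewrite sum2 /= mulr1 mulr0 add0r.
by exists d, (f ord0), (f (lift ord0 ord0)), a', b'; split=> //; rewrite Hf sum2.
Qed.

Lemma lb (a b : R) : exists g x y a' b', [/\ g = x * a + y * b, a = a' * g & b = b' * g].
Proof.
have [d Hd] := bz.2 [:: a; b].
have [f Hf] : in_lideal [:: a; b] d by apply/Hd; exists 1; rewrite mul1r.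
have [a' Ha] : exists r, a = r * d.
  apply/Hd; exists (fun i : 'I_2 => if i == ord0 then 1 else 0).
  by rewrite sum2 /= mul1r mul0r addr0.
have [b' Hb] : exists r, b = r * d.
  apply/Hd; exists (fun i : 'I_2 => if i == ord0 then 0 else 1).
  by rewrite sum2 /= mul1r mul0r add0r.
by exists d, (f ord0), (f (lift ord0 ord0)), a', b'; split=> //; rewrite Hf sum2.
Qed.

Definition dvd (d x : R) := exists y, x = d * y.

Lemma dvd0 d : dvd d 0. Proof. by exists 0; rewrite mulr0. Qed.
Lemma dvdrr d : dvd d d. Proof. by exists 1; rewrite mulr1. Qed.
Lemma dvdD d x y : dvd d x -> dvd d y -> dvd d (x + y).
Proof. by move=> [u ->] [v ->]; exists (u + v); rewrite mulrDr. Qed.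
Lemma dvdN d x : dvd d x -> dvd d (- x).
Proof. by move=> [u ->]; exists (- u); rewrite mulrN. Qed.
Lemma dvdB d x y : dvd d x -> dvd d y -> dvd d (x - y).
Proof. by move=> ??; apply: dvdD => //; apply: dvdN. Qed.
Lemma dvdMr d x r : dvd d x -> dvd d (x * r).
Proof. by move=> [u ->]; exists (u * r); rewrite mulrA. Qed.
Lemma dvdMl d x r : dvd d x -> dvd d (r * x).
Proof. by move=> [u ->]; have [r' e] := invR d r; exists (r' * u); rewrite mulrA e mulrA. Qed.
Lemma dvd_trans d e x : dvd d e -> dvd e x -> dvd d x.
Proof. by move=> [u ->] [v ->]; exists (u * v); rewrite mulrA. Qed.
Lemma dvdRL d x : dvd d x -> exists y, x = y * d.
Proof. by move=> [u ->]; apply: invL. Qed.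
Lemma dvd_sum d n (F : 'I_n -> R) : (forall i, dvd d (F i)) -> dvd d (\sum_(i < n) F i).
Proof. by move=> H; apply: big_ind => //; [apply: dvd0 | apply: dvdD]. Qed.

Lemma dvd_ideal2 d e x : dvd d e -> in_ideal2 [:: e] x -> dvd d x.
Proof.
move=> de [n [u [v [k ->]]]]; apply: dvd_sum => i.
apply: dvdMr; apply: dvdMl; case: (k i) => [[|//] ?] /=; exact: de.
Qed.

Lemma ideal2_r (s t x : R) : in_ideal2 [:: s; t] x -> exists X Y, x = s * X + t * Y.
Proof.
move=> [n [u [v [k ->]]]].
apply: (big_ind (fun z => exists X Y, z = s * X + t * Y)).
- by exists 0, 0; rewrite !mulr0 addr0.
- by move=> _ _ [X [Y ->]] [X' [Y' ->]]; exists (X + X'), (Y + Y'); rewrite !mulrDr; ncr.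
move=> i _; case: (k i) => [[|[|//]] ?] /=.
  by have [u' ->] := invR s (u i); exists (u' * v i), 0; rewrite mulr0 addr0 mulrA.
by have [u' ->] := invR t (u i); exists 0, (u' * v i); rewrite mulr0 add0r mulrA.
Qed.

Definition F1R := F1 dom rb.
Definition F2R := F2 dom lb.

Definition tri (x0 x1 y0 y1 a b c z : R) := (x0 * a + x1 * b) * y0 + (x0 * c + x1 * z) * y1.

Lemma unimod_F1 (p q X Y : R) : p * X + q * Y = 1 ->
  exists a0 b0 c0 d0 a' b' c' d', inv2 a0 b0 c0 d0 a' b' c' d' /\
    a' = p /\ b' = q /\ p * a0 + q * c0 = 1 /\ p * b0 + q * d0 = 0.
Proof.
move=> H.
have [g [q1 [q2 [q3 [q4 [w1 [w2 [w3 [w4 [[[J1 J2 J3 J4] [J5 J6 J7 J8]] [K1 K2]]]]]]]]]]] := F1R p q.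
have ep : p = g * w1.
  have -> : p = p * (q1 * w1 + q2 * w3) + q * (q3 * w1 + q4 * w3) by rewrite J1 J3 mulr1 mulr0 addr0.
  have -> : p * (q1 * w1 + q2 * w3) + q * (q3 * w1 + q4 * w3) = (p * q1 + q * q3) * w1 + (p * q2 + q * q4) * w3 by ncr.
  by rewrite K1 K2 mul0r addr0.
have eq' : q = g * w2.
  have -> : q = p * (q1 * w2 + q2 * w4) + q * (q3 * w2 + q4 * w4) by rewrite J2 J4 mulr1 mulr0 add0r.
  have -> : p * (q1 * w2 + q2 * w4) + q * (q3 * w2 + q4 * w4) = (p * q1 + q * q3) * w2 + (p * q2 + q * q4) * w4 by ncr.
  by rewrite K1 K2 mul0r addr0.
have gz : g * (w1 * X + w2 * Y) = 1 by rewrite -H ep eq'; ncr.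
have zg := unit_r dom gz.
set z := w1 * X + w2 * Y in gz zg.
exists (q1 * z), q2, (q3 * z), q4, p, q, w3, w4; split; last first.
  do 2 (split; first done); split; last by rewrite K2.
  by rewrite !mulrA -mulrDl K1 gz.
have e1 : forall u v, u * z * (g * v) = u * v by move=> u v; rewrite -mulrA (mulrA z) zg mul1r.
split; split.
- by rewrite ep e1 J1.
- by rewrite eq' e1 J2.
- by rewrite ep e1 J3.
- by rewrite eq' e1 J4.
- by rewrite !mulrA -mulrDl K1 gz.
- by rewrite K2.
- by rewrite !mulrA -mulrDl J7 mul0r.
- by rewrite J8.
Qed.

Lemma L2 (a b c z : R) : c != 0 -> z = 0 ->
  exists x00 x01 x10 x11 x00' x01' x10' x11' y00 y01 y10 y11 y00' y01' y10' y11',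
  inv2 x00 x01 x10 x11 x00' x01' x10' x11' /\ inv2 y00 y01 y10 y11 y00' y01' y10' y11' /\
  let n00 := tri x00 x01 y00 y10 a b c z in
  [/\ dvd n00 (tri x00 x01 y01 y11 a b c z), dvd n00 (tri x10 x11 y00 y10 a b c z),
      dvd n00 (tri x10 x11 y01 y11 a b c z) & dvd n00 c].
Proof.
move=> cn0 z0.
have [g1 [x1 [y1 [a1' [b1' [Hg1 Ha1 Hb1]]]]]] := rb a b.
have [d [x2 [y2 [g1' [c1 [Hd Hg1' Hc]]]]]] := rb g1 c.
have [a1 Ha] : exists a1, a = d * a1 by exists (g1' * a1'); rewrite Ha1 Hg1' mulrA.
have [b1 Hb] : exists b1, b = d * b1 by exists (g1' * b1'); rewrite Hb1 Hg1' mulrA.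
have dn0 : d != 0 by apply: contraNneq cn0 => d0; rewrite Hc d0 mul0r.
have c1n0 : c1 != 0 by apply: contraNneq cn0 => c0; rewrite Hc c0 mulr0.
have H1 : a1 * (x1 * x2) + b1 * (y1 * x2) + c1 * y2 = 1.
  apply: (canl dom dn0); rewrite mulr1 {2}Hd Hg1 Ha Hb Hc; ncr.
have [p [q Hpq]] : exists p q : R, forall x, in_ideal2 [:: p * a1 + q * b1; p * c1] x.
  apply: sr => // x; exists 3, (fun _ => 1).
  exists (fun i : 'I_3 => nth 0 [:: x1 * x2 * x; y1 * x2 * x; y2 * x] i), id.
  rewrite !big_ord_recl big_ord0 /= !mul1r addr0 -[x]mul1r -{1}H1; ncr.
have [X0 [Y0 HXY]] := ideal2_r (Hpq 1).
have [p' Hp'] := invL d p.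
have [q' Hq'] := invL d q.
have [X'' HX''] := invL d (a1 * X0 + c1 * Y0).
have [Y'' HY''] := invL d (b1 * X0).
have U1 : p' * X'' + q' * Y'' = 1.
  apply: (canr dom dn0); rewrite mul1r mulrDl -!mulrA -HX'' -HY'' !mulrA -Hp' -Hq'.
  rewrite -[d in RHS]mulr1 HXY ; ncr.
have [x00' [x01' [x10' [x11' [x00 [x01 [x10 [x11 [[IX1 IX2] [ep' [eq' _]]]]]]]]]]] := unimod_F1 U1.
have [y00 [y01 [y10 [y11 [y00' [y01' [y10' [y11' [IY [_ [_ [K1 K2]]]]]]]]]]]] := unimod_F1 (esym HXY).
exists x00, x01, x10, x11, x00', x01', x10', x11', y00, y01, y10, y11, y00', y01', y10', y11'.
split; first by split.
split=> //.
have R1 : x00 * a + x01 * b = d * (p * a1 + q * b1) by rewrite ep' eq' Ha Hb !mulrA -Hp' -Hq'; ncr.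
have R2 : x00 * c + x01 * z = d * (p * c1) by rewrite ep' eq' z0 Hc mulr0 addr0 mulrA -Hp'; ncr.
have N0 : tri x00 x01 y00 y10 a b c z = d.
  rewrite /tri R1 R2.
  have -> : forall u v w1 w2 : R, d * u * w1 + d * v * w2 = d * (u * w1 + v * w2) by move=> *; ncr.
  by rewrite K1 mulr1.
have Dd : forall w, dvd d (w * a) by move=> w; rewrite Ha; apply: dvdMl; exists a1.
have Dd' : forall w, dvd d (w * b) by move=> w; rewrite Hb; apply: dvdMl; exists b1.
have Dd'' : forall w, dvd d (w * c) by move=> w; rewrite Hc; apply: dvdMl; exists c1.
have Dz : forall w, dvd d (w * z) by move=> w; rewrite z0 mulr0; apply: dvd0.
rewrite N0; split.
- rewrite /tri R1 R2.
  have -> : forall u v w1 w2 : R, d * u * w1 + d * v * w2 = d * (u * w1 + v * w2) by move=> *; ncr.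
  by rewrite K2 mulr0; apply: dvd0.
- by rewrite /tri; apply: dvdD; apply: dvdMr; apply: dvdD.
- by rewrite /tri; apply: dvdD; apply: dvdMr; apply: dvdD.
- by exists c1.
Qed.

Definition E01 {k} (a b c d : R) : 'M[R]_(k.+2) :=
  \matrix_(i, j) if (i : nat) == 0%N then (if (j : nat) == 0%N then a else if (j : nat) == 1%N then b else 0)
                 else if (i : nat) == 1%N then (if (j : nat) == 0%N then c else if (j : nat) == 1%N then d else 0)
                 else (i == j)%:R.

Lemma E01_mull k n (a b c d : R) (A : 'M[R]_(k.+2, n)) i j :
  (E01 a b c d *m A) i j =
  if (i : nat) == 0%N then a * A ord0 j + b * A (lift ord0 ord0) j
  else if (i : nat) == 1%N then c * A ord0 j + d * A (lift ord0 ord0) j else A i j.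
Proof.
case: ifP => [i0|i0]; last case: ifP => [i1|i1].
- rewrite mxE 2!big_ord_recl !mxE i0 /= big1 ?addr0 // => l _.
  by rewrite mxE i0 !lift0 mul0r.
- rewrite mxE 2!big_ord_recl !mxE i0 i1 /= big1 ?addr0 // => l _.
  by rewrite mxE i0 i1 !lift0 mul0r.
- rewrite -[A i j](congr1 (fun M : 'M[R]_(k.+2, n) => M i j) (mul1mx A)) !mxE; apply: eq_bigr => l _.
  by rewrite !mxE i0 i1.
Qed.

Lemma E01_mulr k m (a b c d : R) (A : 'M[R]_(m, k.+2)) i j :
  (A *m E01 a b c d) i j =
  if (j : nat) == 0%N then A i ord0 * a + A i (lift ord0 ord0) * c
  else if (j : nat) == 1%N then A i ord0 * b + A i (lift ord0 ord0) * d else A i j.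
Proof.
case: ifP => [j0|j0]; last case: ifP => [j1|j1].
- rewrite mxE 2!big_ord_recl !mxE j0 /= big1 ?addr0 // => l _.
  rewrite mxE !lift0 /=; case: eqP => [e|_]; last by rewrite mulr0.
  by move: j0; rewrite -e !lift0.
- rewrite mxE 2!big_ord_recl !mxE j0 j1 /= big1 ?addr0 // => l _.
  rewrite mxE !lift0 /=; case: eqP => [e|_]; last by rewrite mulr0.
  by move: j1; rewrite -e !lift0.
- rewrite -[A i j](congr1 (fun M : 'M[R]_(m, k.+2) => M i j) (mulmx1 A)) !mxE; apply: eq_bigr => l _.
  rewrite !mxE j0 j1; congr (_ * _).
  case: ifP => [/eqP l0|_]; last case: ifP => [/eqP l1|_] //.
  all: case E: (l == j) => //; move/eqP: E => e.
  - by move: j0; rewrite -e l0.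
  - by move: j1; rewrite -e l1.
Qed.

Lemma E01_mul k (a b c d a' b' c' d' : R) :
  E01 a b c d *m E01 a' b' c' d' =
  E01 (k := k) (a * a' + b * c') (a * b' + b * d') (c * a' + d * c') (c * b' + d * d').
Proof.
apply/matrixP => i j; rewrite E01_mull !mxE /=.
case: i => [[|[|i]] Hi] /=; case: j => [[|[|j]] Hj] //=; rewrite ?mulr0 ?addr0 //.
Qed.

Lemma E01_1 k : E01 (k := k) 1 0 0 1 = 1%:M.
Proof.
apply/matrixP => i j; rewrite !mxE.
by case: i => [[|[|i]] Hi] /=; case: j => [[|[|j]] Hj] //=.
Qed.

Lemma inv_mul m (P Q : 'M[R]_m) : invertible_mx P -> invertible_mx Q -> invertible_mx (P *m Q).
Proof.
move=> [P' [H1 H2]] [Q' [H3 H4]]; exists (Q' *m P'); split.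
  by rewrite mulmxA -(mulmxA P) H3 mulmx1 H1.
by rewrite mulmxA -(mulmxA Q') H2 mulmx1 H4.
Qed.

Lemma inv_1 m : invertible_mx (1%:M : 'M[R]_m).
Proof. by exists 1%:M; rewrite mulmx1. Qed.

Lemma inv_E01 k (a b c d a' b' c' d' : R) : inv2 a b c d a' b' c' d' ->
  invertible_mx (E01 (k := k) a b c d).
Proof.
move=> [[J1 J2 J3 J4] [J5 J6 J7 J8]]; exists (E01 a' b' c' d').
by rewrite !E01_mul J1 J2 J3 J4 J5 J6 J7 J8 E01_1.
Qed.

Definition lift1 n (P : 'M[R]_n) : 'M[R]_(n.+1) :=
  \matrix_(i, j) match unlift ord0 i, unlift ord0 j with
                 | Some i', Some j' => P i' j' | _, _ => (i == j)%:R end.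

Definition dropr m n (A : 'M[R]_(m.+1, n)) : 'M[R]_(m, n) := \matrix_(i, j) A (lift ord0 i) j.
Definition dropc m n (A : 'M[R]_(m, n.+1)) : 'M[R]_(m, n) := \matrix_(i, j) A i (lift ord0 j).

Lemma lift1_mull0 n p (P : 'M[R]_n) (A : 'M[R]_(n.+1, p)) j :
  (lift1 P *m A) ord0 j = A ord0 j.
Proof.
rewrite mxE big_ord_recl !mxE unlift_none eqxx mul1r big1 ?addr0 // => l _.
by rewrite mxE unlift_none mul0r.
Qed.

Lemma lift1_mullS n p (P : 'M[R]_n) (A : 'M[R]_(n.+1, p)) i j :
  (lift1 P *m A) (lift ord0 i) j = (P *m dropr A) i j.
Proof.
rewrite mxE big_ord_recl !mxE liftK unlift_none mul0r add0r.
by apply: eq_bigr => l _; rewrite !mxE !liftK.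
Qed.

Lemma lift1_mulr0 n p (Q : 'M[R]_n) (A : 'M[R]_(p, n.+1)) i :
  (A *m lift1 Q) i ord0 = A i ord0.
Proof.
rewrite mxE big_ord_recl !mxE unlift_none eqxx mulr1 big1 ?addr0 // => l _.
by rewrite mxE liftK unlift_none mulr0.
Qed.

Lemma lift1_mulrS n p (Q : 'M[R]_n) (A : 'M[R]_(p, n.+1)) i j :
  (A *m lift1 Q) i (lift ord0 j) = (dropc A *m Q) i j.
Proof.
rewrite mxE big_ord_recl !mxE liftK unlift_none mulr0 add0r.
by apply: eq_bigr => l _; rewrite !mxE !liftK.
Qed.

Lemma lift1_mul n (P Q : 'M[R]_n) : lift1 P *m lift1 Q = lift1 (P *m Q).
Proof.
apply/matrixP => i j.
case: (unliftP ord0 i) => [i'|] ->.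
  rewrite lift1_mullS; case: (unliftP ord0 j) => [j'|] ->.
    by rewrite !mxE !liftK !mxE; apply: eq_bigr => l _; rewrite !mxE !liftK.
  rewrite !mxE liftK unlift_none big1 // => l _; rewrite !mxE liftK unlift_none mulr0.
  by [].
by rewrite lift1_mull0 !mxE unlift_none.
Qed.

Lemma lift1_1 n : lift1 (1%:M : 'M[R]_n) = 1%:M.
Proof.
apply/matrixP => i j; rewrite !mxE.
case: (unliftP ord0 i) => [i'|] ->; case: (unliftP ord0 j) => [j'|] ->; rewrite ?liftK ?unlift_none //.
by rewrite !mxE (inj_eq lift_inj).
Qed.

Lemma inv_lift1 n (P : 'M[R]_n) : invertible_mx P -> invertible_mx (lift1 P).
Proof.
by move=> [P' [H1 H2]]; exists (lift1 P'); rewrite !lift1_mul H1 H2 lift1_1.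
Qed.

Lemma dropc_mull m n p (P : 'M[R]_(m, n)) (A : 'M[R]_(n, p.+1)) :
  dropc (P *m A) = P *m dropc A.
Proof. by apply/matrixP => i j; rewrite !mxE; apply: eq_bigr => l _; rewrite !mxE. Qed.

Lemma dropr_mulr m n p (A : 'M[R]_(m.+1, n)) (Q : 'M[R]_(n, p)) :
  dropr (A *m Q) = dropr A *m Q.
Proof. by apply/matrixP => i j; rewrite !mxE; apply: eq_bigr => l _; rewrite !mxE. Qed.

Definition Lt m (c : 'I_(m.+1) -> R) : 'M[R]_(m.+1) :=
  \matrix_(i, j) if i == j then 1 else if j == ord0 then c i else 0.
Definition Ut n (e : 'I_(n.+1) -> R) : 'M[R]_(n.+1) :=
  \matrix_(i, j) if i == j then 1 else if i == ord0 then e j else 0.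

Lemma Lt_mul m p (c : 'I_(m.+1) -> R) (A : 'M[R]_(m.+1, p)) i j :
  (Lt c *m A) i j = A i j + (if i == ord0 then 0 else c i * A ord0 j).
Proof.
rewrite mxE big_ord_recl !mxE.
case: (unliftP ord0 i) => [i'|] -> /=.
  rewrite (bigD1 i') //= !mxE eqxx mul1r big1 ?addr0 => [|l Hl].
    by rewrite addrC.
  have Hl' : (i' == l) = false by rewrite eq_sym (negPf Hl).
  by rewrite !mxE (inj_eq lift_inj) Hl' lift_eqF mul0r.
rewrite mul1r big1 ?addr0 => [//|l _].
by rewrite mxE (eq_sym ord0) lift_eqF mul0r.
Qed.

Lemma Ut_mul m p (e : 'I_(p.+1) -> R) (A : 'M[R]_(m, p.+1)) i j :
  (A *m Ut e) i j = A i j + (if j == ord0 then 0 else A i ord0 * e j).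
Proof.
rewrite mxE big_ord_recl !mxE.
case: (unliftP ord0 j) => [j'|] -> /=.
  rewrite (bigD1 j') //= !mxE eqxx mulr1 big1 ?addr0 => [|l Hl].
    by rewrite addrC.
  by rewrite /Ut !mxE (inj_eq lift_inj) (negPf Hl) lift_eqF mulr0.
rewrite mulr1 big1 ?addr0 => [//|l _].
by rewrite /Ut mxE lift_eqF mulr0.
Qed.

Lemma inv_Lt m (c : 'I_(m.+1) -> R) : invertible_mx (Lt c).
Proof.
have K : forall c1 c2 : 'I_(m.+1) -> R, (forall i, c2 i = - c1 i) -> Lt c1 *m Lt c2 = 1%:M.
  move=> c1 c2 Hc; apply/matrixP => i j; rewrite Lt_mul !mxE.
  case: (unliftP ord0 i) => [i'|] ->; case: (unliftP ord0 j) => [j'|] ->;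
    rewrite ?eqxx ?lift_eqF ?(eq_sym ord0) ?lift_eqF ?(inj_eq lift_inj) /=.
  all: rewrite ?mulr0 ?addr0 ?mulr1 ?Hc ?addNr ?addrN //.
  by case: (i' == j').
exists (Lt (fun i => - c i)); split; apply: K => // i; by rewrite opprK.
Qed.

Lemma inv_Ut n (e : 'I_(n.+1) -> R) : invertible_mx (Ut e).
Proof.
have K : forall c1 c2 : 'I_(n.+1) -> R, (forall i, c2 i = - c1 i) -> Ut c1 *m Ut c2 = 1%:M.
  move=> c1 c2 Hc; apply/matrixP => i j; rewrite Ut_mul !mxE.
  case: (unliftP ord0 i) => [i'|] ->; case: (unliftP ord0 j) => [j'|] ->;
    rewrite ?eqxx ?lift_eqF ?(eq_sym ord0) ?lift_eqF ?(inj_eq lift_inj) /=.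
  all: rewrite ?mul0r ?addr0 ?mul1r ?Hc ?addNr ?addrN //.
  by case: (i' == j').
exists (Ut (fun i => - e i)); split; apply: K => // i; by rewrite opprK.
Qed.

Lemma dvd_mull d m n p (P : 'M[R]_(m, n)) (A : 'M[R]_(n, p)) i j :
  (forall i j, dvd d (A i j)) -> dvd d ((P *m A) i j).
Proof. by move=> H; rewrite mxE; apply: dvd_sum => k; apply: dvdMl. Qed.

Lemma dvd_mulr d m n p (A : 'M[R]_(m, n)) (Q : 'M[R]_(n, p)) i j :
  (forall i j, dvd d (A i j)) -> dvd d ((A *m Q) i j).
Proof. by move=> H; rewrite mxE; apply: dvd_sum => k; apply: dvdMr. Qed.

Lemma dvd0_eq (x : R) : dvd 0 x -> x = 0.
Proof. by move=> [y ->]; rewrite mul0r. Qed.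

Lemma colH m : forall v : 'M[R]_(m.+1, 1), exists P, invertible_mx P /\
  forall i, i != ord0 -> (P *m v) i ord0 = 0.
Proof.
elim: m => [|m IH] v.
  by exists 1%:M; split; [apply: inv_1 | move=> i; rewrite (ord1 i) eqxx].
have [P' [IP' HP']] := IH (dropr v).
set a := v ord0 ord0; set g' := (P' *m dropr v) ord0 ord0.
have [g [p00 [p01 [p10 [p11 [w00 [w01 [w10 [w11 [Iw [_ K2]]]]]]]]]]] := F2R a g'.
exists (E01 p00 p01 p10 p11 *m lift1 P'); split.
  by apply: inv_mul; [apply: inv_E01; exact: Iw | apply: inv_lift1].
move=> i i0; rewrite -mulmxA E01_mull.
case: (unliftP ord0 i) i0 => [i'|] -> //; rewrite lift0 /= => _.
case: (unliftP ord0 i') => [i''|] ->.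
  by rewrite lift0 /= lift1_mullS HP' // lift_eqF.
by rewrite /= lift1_mull0 lift1_mullS; exact: K2.
Qed.

Definition cleared m n (C : 'M[R]_(m.+1, n.+1)) :=
  [/\ forall j, j != ord0 -> C ord0 j = 0, forall i, i != ord0 -> C i ord0 = 0 &
      forall i j, dvd (C ord0 ord0) (C i j)].

Definition cornerdiv m n (C : 'M[R]_(m.+1, n.+1)) := forall i j, dvd (C ord0 ord0) (C i j).

Lemma equiv_step m n (Pr : 'M[R]_(m, n) -> Prop) (A : 'M[R]_(m, n)) P0 Q0 :
  invertible_mx P0 -> invertible_mx Q0 ->
  (exists P Q, [/\ invertible_mx P, invertible_mx Q & Pr (P *m (P0 *m A *m Q0) *m Q)]) ->
  exists P Q, [/\ invertible_mx P, invertible_mx Q & Pr (P *m A *m Q)].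
Proof.
move=> I0 J0 [P [Q [I J H]]]; exists (P *m P0), (Q0 *m Q); split; try by apply: inv_mul.
by rewrite !mulmxA in H *.
Qed.

Lemma clear m n (B : 'M[R]_(m.+1, n.+1)) : cornerdiv B ->
  exists P Q, [/\ invertible_mx P, invertible_mx Q & cleared (P *m B *m Q)].
Proof.
move=> H; set d := B ord0 ord0.
have Hc i : exists y, B i ord0 == y * d by have [y ->] := dvdRL (H i ord0); exists y.
have Hz j : exists y, B ord0 j == d * y by have [y ->] := H ord0 j; exists y.
set c := fun i => xchoose (Hc i); set z := fun j => xchoose (Hz j).
have Ec i : B i ord0 = c i * d by apply/eqP; apply: (xchooseP (Hc i)).
have Ez j : B ord0 j = d * z j by apply/eqP; apply: (xchooseP (Hz j)).
exists (Lt (fun i => - c i)), (Ut (fun j => - z j)); split; try by [apply: inv_Lt | apply: inv_Ut].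
have E i j : (Lt (fun i => - c i) *m B *m Ut (fun j => - z j)) i j =
   B i j + (if i == ord0 then 0 else - c i * B ord0 j) +
   (if j == ord0 then 0 else (B i ord0 + (if i == ord0 then 0 else - c i * B ord0 ord0)) * - z j).
  by rewrite Ut_mul !Lt_mul.
have E00 : (Lt (fun i => - c i) *m B *m Ut (fun j => - z j)) ord0 ord0 = d by rewrite E eqxx !addr0.
split.
- by move=> j /negPf j0; rewrite E eqxx j0 !addr0 Ez -/d mulrN addrN.
- by move=> i /negPf i0; rewrite E eqxx i0 addr0 Ec mulNr addrN.
move=> i j; rewrite E00 E.
apply: dvdD; last by case: ifP => _; [apply: dvd0 | apply: dvdMr; apply: dvdD; [apply: H | case: ifP => _; [apply: dvd0 | apply: dvdMl; apply: H]]].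
apply: dvdD; first exact: H.
by case: ifP => _; [apply: dvd0 | apply: dvdMl; apply: H].
Qed.

Lemma cd_cleared m n (A : 'M[R]_(m.+1, n.+1)) :
  (exists P Q, [/\ invertible_mx P, invertible_mx Q & cornerdiv (P *m A *m Q)]) ->
  exists P Q, [/\ invertible_mx P, invertible_mx Q & cleared (P *m A *m Q)].
Proof.
move=> [P [Q [I J H]]]; apply: (equiv_step I J); exact: clear.
Qed.

Lemma ord1E (j : 'I_1) : j = ord0.
Proof. by apply: val_inj; case: j => [[]]. Qed.

Lemma CLp n : forall m (A : 'M[R]_(m.+1, n.+1)),
  exists P Q, [/\ invertible_mx P, invertible_mx Q & cleared (P *m A *m Q)].
Proof.
elim: n => [|n IH] m A.
  have [P [IP HP]] := colH A.
  apply: cd_cleared; exists P, 1%:M; split; [done | apply: inv_1 |].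
  rewrite mulmx1 => i j; rewrite (ord1E j).
  by case: (i =P ord0) => [->|/eqP i0]; [apply: dvdrr | rewrite (HP i i0); apply: dvd0].
have [P1 [Q1 [I1 J1 [C1 C2 C3]]]] := IH m (dropc A).
apply: (equiv_step I1 (inv_lift1 J1)).
move: C1 C2 C3.
set A1 := P1 *m A *m lift1 Q1.
set B' := P1 *m dropc A *m Q1 => C1 C2 C3.
have EA1 i j : A1 i (lift ord0 j) = B' i j by rewrite /A1 lift1_mulrS dropc_mull.
move: C3; set e := B' ord0 ord0 => C3.
have He : B' ord0 ord0 = e by [].
clearbody A1 B' e; move: A1 B' e He EA1 C1 C2 C3; clear P1 I1 A.
case: m => [|m] A1 B' e He EA1 C1 C2 C3.
  have [g [q00 [q01 [q10 [q11 [w00 [w01 [w10 [w11 [Iw [K1 K2]]]]]]]]]]] := F1R (A1 ord0 ord0) e.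
  apply: cd_cleared; exists 1%:M, (E01 q00 q01 q10 q11); split; [apply: inv_1 | apply: inv_E01; exact: Iw |].
  rewrite mul1mx.
  have Cg : (A1 *m E01 q00 q01 q10 q11) ord0 ord0 = g by rewrite E01_mulr /= EA1 He.
  move=> i j; rewrite (ord1E i) Cg.
  case: (unliftP ord0 j) => [j1|] ->; last by rewrite Cg; apply: dvdrr.
  case: (unliftP ord0 j1) => [j2|] ->; rewrite E01_mulr !lift0 /=.
    by rewrite EA1 C1 ?lift_eqF //; apply: dvd0.
  by rewrite EA1 He K2; apply: dvd0.
have [e0|en0] := eqVneq e 0.
  have Z i j : B' i j = 0 by apply: dvd0_eq; rewrite -e0; apply: C3.
  have [P2 [IP2 HP2]] := colH (\matrix_(i < m.+2, j < 1) A1 i ord0).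
  apply: cd_cleared; exists P2, 1%:M; split; [done | apply: inv_1 |]; rewrite mulmx1.
  have col0 i : (P2 *m A1) i ord0 = (P2 *m \matrix_(i < m.+2, j < 1) A1 i ord0) i ord0.
    by rewrite !mxE; apply: eq_bigr => k _; rewrite mxE.
  have colS i j : (P2 *m A1) i (lift ord0 j) = 0.
    by rewrite mxE big1 // => k _; rewrite EA1 Z mulr0.
  move=> i j; case: (unliftP ord0 j) => [j'|] ->; first by rewrite colS; apply: dvd0.
  by case: (i =P ord0) => [->|/eqP i0]; [apply: dvdrr | rewrite (col0 i) (HP2 i i0); apply: dvd0].
have [P2 [IP2 HP2]] := colH (\matrix_(i < m.+1, j < 1) A1 (lift ord0 i) ord0).
apply: (equiv_step (inv_lift1 IP2) (inv_1 _)); rewrite mulmx1.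
set A2 := lift1 P2 *m A1.
have H00 : A2 ord0 ord0 = A1 ord0 ord0 by rewrite lift1_mull0.
have H01 : A2 ord0 (lift ord0 ord0) = e by rewrite lift1_mull0 EA1 He.
have H0S j : A2 ord0 (lift ord0 (lift ord0 j)) = 0 by rewrite lift1_mull0 EA1 C1 // lift_eqF.
set b := (P2 *m \matrix_(i < m.+1, j < 1) A1 (lift ord0 i) ord0) ord0 ord0.
have HxS i j : A2 (lift ord0 i) (lift ord0 j) = \sum_k P2 i k * B' (lift ord0 k) j.
  by rewrite lift1_mullS mxE; apply: eq_bigr => k _; rewrite mxE EA1.
have Hx0 i : A2 (lift ord0 i) ord0 = (P2 *m \matrix_(i < m.+1, j < 1) A1 (lift ord0 i) ord0) i ord0.
  by rewrite lift1_mullS !mxE; apply: eq_bigr => k _; rewrite !mxE.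
have H10 : A2 (lift ord0 ord0) ord0 = b by rewrite Hx0.
have HS0 i : A2 (lift ord0 (lift ord0 i)) ord0 = 0 by rewrite Hx0 HP2 // lift_eqF.
have Hx1 i : A2 (lift ord0 i) (lift ord0 ord0) = 0.
  by rewrite HxS big1 // => k _; rewrite C2 ?lift_eqF // mulr0.
have HSS i j : dvd e (A2 (lift ord0 i) (lift ord0 j)).
  by rewrite HxS; apply: dvd_sum => k; apply: dvdMl; apply: C3.
have [x00 [x01 [x10 [x11 [x00' [x01' [x10' [x11' [y00 [y01 [y10 [y11 [y00' [y01' [y10' [y11' [IX [IY]]]]]]]]]]]]]]]]]] := L2 (A2 ord0 ord0) b en0 (erefl 0).
move=> [D01 D10 D11 De].
apply: cd_cleared; exists (E01 x00 x01 x10 x11), (E01 y00 y01 y10 y11).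
split; [apply: inv_E01; exact: IX | apply: inv_E01; exact: IY |].
have Cn : (E01 x00 x01 x10 x11 *m A2 *m E01 y00 y01 y10 y11) ord0 ord0 =
   tri x00 x01 y00 y10 (A2 ord0 ord0) b e 0.
  by rewrite E01_mulr /= !E01_mull /= H01 H10 Hx1.
move=> i j; rewrite Cn.
have Dn : forall x, dvd e x -> dvd (tri x00 x01 y00 y10 (A2 ord0 ord0) b e 0) x.
  by move=> x; apply: dvd_trans.
case: (unliftP ord0 i) => [i1|] ->; [case: (unliftP ord0 i1) => [i2|] -> |];
case: (unliftP ord0 j) => [j1|] ->; try case: (unliftP ord0 j1) => [j2|] ->;
rewrite E01_mulr !E01_mull ?lift0 /=.
all: rewrite ?H10 ?H01 ?HS0 ?Hx1 ?H0S.
- by apply: Dn; apply: HSS.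
- by rewrite !mul0r add0r; apply: dvd0.
- by rewrite !mul0r add0r; apply: dvd0.
- by rewrite mulr0 add0r; apply: Dn; apply: dvdMl; apply: HSS.
- exact: D11.
- exact: D10.
- by rewrite mulr0 add0r; apply: Dn; apply: dvdMl; apply: HSS.
- exact: D01.
- exact: dvdrr.
Qed.

Lemma diag m : forall n (A : 'M[R]_(m, n)),
    exists (P : 'M[R]_m) (Q : 'M[R]_n) (r : nat) (eps : nat -> R),
      [/\ invertible_mx P, invertible_mx Q, (r <= minn m n)%N &
      [/\
        (forall (i : 'I_m) (j : 'I_n),
            (P *m A *m Q) i j = if ((i : nat) == j) && (i < r)%N then eps i else 0),
        (forall i, (i < r)%N -> eps i != 0),
        (forall i, (i.+1 < r)%N -> forall x, in_ideal2 [:: eps i.+1] x ->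
             (exists y, x = eps i * y) /\ (exists y, x = y * eps i)) &
        (forall i, (i.+1 < r)%N -> invariant_elt (eps i))]].
Proof.
have triv : forall m n (A : 'M[R]_(m, n)), (m = 0 \/ n = 0)%N ->
    exists (P : 'M[R]_m) (Q : 'M[R]_n) (r : nat) (eps : nat -> R),
      [/\ invertible_mx P, invertible_mx Q, (r <= minn m n)%N &
      [/\
        (forall (i : 'I_m) (j : 'I_n),
            (P *m A *m Q) i j = if ((i : nat) == j) && (i < r)%N then eps i else 0),
        (forall i, (i < r)%N -> eps i != 0),
        (forall i, (i.+1 < r)%N -> forall x, in_ideal2 [:: eps i.+1] x ->
             (exists y, x = eps i * y) /\ (exists y, x = y * eps i)) &
        (forall i, (i.+1 < r)%N -> invariant_elt (eps i))]].
  move=> m0 n0 A0 H; exists 1%:M, 1%:M, 0%N, (fun _ => 0); split; [exact: inv_1 | exact: inv_1 | by [] |].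
  split=> //; move=> i j; exfalso; case: H => H; [move: i (ltn_ord i) | move: j (ltn_ord j)]; rewrite H => ? //.
elim: m => [|m IH] n A; first by apply: triv; left.
case: n A => [|n] A; first by apply: triv; right.
have [P0 [Q0 [I0 J0 [C1 C2 C3]]]] := CLp A.
set B := P0 *m A *m Q0 in C1 C2 C3.
have EBd : B = P0 *m A *m Q0 by [].
clearbody B.
set d := B ord0 ord0 in C3.
have [d0|dn0] := eqVneq d 0.
  have Z i j : B i j = 0 by apply: dvd0_eq; rewrite -d0; apply: C3.
  exists P0, Q0, 0%N, (fun _ => 0); split=> //; split=> //.
  by move=> i j; rewrite -EBd Z andbF.
have [P' [Q' [r' [eps' [I' J' Hr [D1 D2 D3 D4]]]]]] := IH n (dropr (dropc B)).
exists (lift1 P' *m P0), (Q0 *m lift1 Q'), r'.+1, (fun k => if k is k'.+1 then eps' k' else d).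
have EB : lift1 P' *m P0 *m A *m (Q0 *m lift1 Q') = lift1 P' *m B *m lift1 Q'.
  by rewrite EBd !mulmxA.
have Dd i j : dvd d ((P' *m dropr (dropc B) *m Q') i j).
  by apply: dvd_mulr => i1 j1; apply: dvd_mull => i2 j2; rewrite /dropr /dropc !mxE; apply: C3.
split; [by apply: inv_mul => //; apply: inv_lift1 | by apply: inv_mul => //; apply: inv_lift1 | by rewrite minnSS ltnS |].
split.
- move=> i j; rewrite EB.
  case: (unliftP ord0 j) => [j'|] ->.
    rewrite lift1_mulrS dropc_mull.
    case: (unliftP ord0 i) => [i'|] ->.
      by rewrite !lift0 eqSS ltnS -D1 -mulmxA lift1_mullS dropr_mulr mulmxA.
    rewrite lift0 /= -mulmxA lift1_mull0 mxE big1 // => k _.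
    by rewrite mxE C1 ?lift_eqF // mul0r.
  rewrite lift1_mulr0.
  case: (unliftP ord0 i) => [i'|] ->; last by rewrite lift1_mull0.
  rewrite lift1_mullS lift0 /= mxE big1 // => k _.
  by rewrite mxE C2 ?lift_eqF // mulr0.
- by case.
- case=> [|i] Hi x Hx.
    have r0 : (0 < r')%N by [].
    have m0 : (0 < m)%N by move: Hr; rewrite leq_min => /andP [] /(leq_trans r0).
    have n0 : (0 < n)%N by move: Hr; rewrite leq_min => /andP [] _ /(leq_trans r0).
    have E0 : eps' 0%N = (P' *m dropr (dropc B) *m Q') (Ordinal m0) (Ordinal n0) by rewrite D1 /= r0.
    have Hd : dvd d x by apply: (dvd_ideal2 _ Hx); rewrite /= E0; apply: Dd.
    by split=> //; apply: dvdRL.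
  exact: D3.
- case=> [|i] Hi; first by apply: ivr.
  by apply: D4.
Qed.
End Main.

Theorem theorem3p7 (R : nzRingType) :
  is_domain R -> bezout R -> invariant_ring R -> simple_range2 R ->
  DK_elementary_divisor_ring R.
Proof.
move=> dom bz ivr sr m n A.
exact: (diag dom bz ivr sr).
Qed.
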